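(* Let $(E,C)$ be a separated graph with $E^0$ and $E^1$ countable (finite or countably infinite), and let $S\subseteq C_{fin}$. Then there exists an $(E,C,S)$-algebraic branching system $(\mathfrak{X},\{R_e\}_{e\in E^1},\{D_v\}_{v\in E^0},\{f_e\}_{e\in E^1})$ with $\mathfrak{X}\subseteq\mathbb{R}$ such that, for every non-sink $v\in E^0$: 1. $R_e\cap R_f\neq\emptyset$ for each $e\in X$, $f\in Y$, whenever $X,Y\in C_v$ with $X\neq Y$; 2. for each $X\in C_v\setminus S$, $\bigcup_{e\in X}R_e\subsetneq D_v$; 3. for $X,Y\in C_v\setminus S$ with $X\neq Y$, $\bigcup_{e\in X}R_e\neq\bigcup_{f\in Y}R_f$.
   Context: A separated graph is a pair $(E,C)$ where $E=(E^0,E^1,r,s)$ is a directed graph (vertex set $E^0$, edge set $E^1$, range and source maps $r,s:E^1\to E^0$) and $C=\bigcup_{v\in E^0}C_v$, where for each non-sink $v$ (i.e. $s^{-1}(v)\neq\emptyset$), $C_v$ is a partition of $s^{-1}(v)$ into pairwise disjoint nonempty sets. $C_{fin}$ denotes the set of all finite sets $Y\in C$. Given $(E,C)$ and $S\subseteq C_{fin}$, an $(E,C,S)$-algebraic branching system consists of a set $\mathfrak{X}$, families of subsets $\{R_e\}_{e\in E^1}$, $\{D_v\}_{v\in E^0}$ of $\mathfrak{X}$ and maps $f_e$ such that: (1) $R_e\cap R_d=\emptyset$ for $d,e\in Y$, $d\neq e$, $Y\in C$; (2) $D_u\cap D_v=\emptyset$ for $u\neq v$ in $E^0$; (3) $R_e\subseteq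 D_{s(e)}$ for each $e\in E^1$; (4) $D_v=\bigcup_{e\in Y}R_e$ whenever $Y\in S\cap C_v$, for each non-sink $v$; (5) for each $e\in E^1$, $f_e:D_{r(e)}\to R_e$ is a bijection. *)

(* Defs.v *)
From Stdlib Require Import Reals List.
Open Scope R_scope.

Definition countable_type (T : Type) : Prop :=
  exists g : T -> nat, forall x y, g x = g y -> x = y.

Definition finite_set {T : Type} (X : T -> Prop) : Prop :=
  exists l : list T, forall x, X x -> In x l.

Definition non_sink {V E : Type} (s : E -> V) (v : V) : Prop :=
  exists e, s e = v.

(* C (a set of sets of edges) is a separation of the graph with source map s:
   its members are nonempty, each contained in s^{-1}(v) for a single v,
   pairwise disjoint, and they cover E^1.  Then C_v (below) is a partition
   of s^{-1}(v) for each non-sink v. *)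
Definition is_separation {V E : Type} (s : E -> V) (C : (E -> Prop) -> Prop) : Prop :=
  (forall X, C X -> exists e, X e) /\
  (forall X, C X -> forall e1 e2, X e1 -> X e2 -> s e1 = s e2) /\
  (forall X Y, C X -> C Y -> (exists e, X e /\ Y e) -> X = Y) /\
  (forall e, exists X, C X /\ X e).

Definition in_Cv {V E : Type} (s : E -> V) (C : (E -> Prop) -> Prop)
  (v : V) (X : E -> Prop) : Prop :=
  C X /\ (forall e, X e -> s e = v).

Definition bij_on {A B : Type} (f : A -> B) (P : A -> Prop) (Q : B -> Prop) : Prop :=
  (forall x, P x -> Q (f x)) /\
  (forall x y, P x -> P y -> f x = f y -> x = y) /\
  (forall y, Q y -> exists x, P x /\ f x = y).

Definition union_R {E : Type} (Rs : E -> R -> Prop) (X : E -> Prop) : R -> Prop :=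
  fun x => exists e, X e /\ Rs e x.

Definition alg_branching_system {V E : Type} (r s : E -> V)
  (C S : (E -> Prop) -> Prop)
  (Xs : R -> Prop) (Rs : E -> R -> Prop) (D : V -> R -> Prop) (f : E -> R -> R) : Prop :=
  (forall e x, Rs e x -> Xs x) /\
  (forall v x, D v x -> Xs x) /\
  (forall Y d e, C Y -> Y d -> Y e -> d <> e -> forall x, ~ (Rs d x /\ Rs e x)) /\
  (forall u v, u <> v -> forall x, ~ (D u x /\ D v x)) /\
  (forall e x, Rs e x -> D (s e) x) /\
  (forall v Y, non_sink s v -> S Y -> in_Cv s C v Y ->
     forall x, D v x <-> union_R Rs Y x) /\
  (forall e, bij_on (f e) (D (r e)) (Rs e)).

(* Main.v *)
Require Import Defs.
From Stdlib Require Import Reals List.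
From Stdlib Require Import Lia Arith Cantor Wf_nat Classical ClassicalEpsilon.
Open Scope nat_scope.

Definition pr (a b : nat) : nat := Cantor.to_nat (a, b).
Lemma pr_inj a b a' b' : pr a b = pr a' b' -> a = a' /\ b = b'.
Proof. unfold pr; intro H. assert (H2 := f_equal Cantor.of_nat H).
  rewrite !Cantor.cancel_of_to in H2. now inversion H2. Qed.
Lemma pr_ge a b : b <= pr a b.
Proof. unfold pr. pose proof (Cantor.to_nat_non_decreasing a b). lia. Qed.

Definition tl_ (w : nat) : nat := snd (Cantor.of_nat w).
Definition coord (k w : nat) : nat := fst (Cantor.of_nat (Nat.iter k tl_ w)).
Fixpoint enc (l : list nat) (t : nat) : nat :=
  match l with nil => t | a :: l' => pr a (enc l' t) end.

Lemma iter_S_in k (f : nat -> nat) x : Nat.iter (S k) f x = Nat.iter k f (f x).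
Proof. induction k; simpl in *; [reflexivity| now rewrite <- IHk]. Qed.

Lemma coord_enc l t k : k < length l -> coord k (enc l t) = nth k l 0.
Proof.
  revert k; induction l as [|a l IH]; intros k Hk; simpl in *. lia.
  destruct k.
  - unfold coord; simpl; unfold pr; now rewrite Cantor.cancel_of_to.
  - unfold coord. rewrite iter_S_in. unfold tl_ at 2. unfold pr. rewrite Cantor.cancel_of_to.
    simpl. apply IH. lia.
Qed.

Lemma enc_ge l t : t <= enc l t.
Proof. induction l; simpl; auto. pose proof (pr_ge a (enc l t)); lia. Qed.

Lemma nth_map_seq (f : nat -> nat) M i : i < M -> nth i (map f (seq 0 M)) 0 = f i.
Proof. intro H. rewrite nth_indep with (d' := f 0) by (rewrite length_map, length_seq; lia).
  rewrite map_nth, seq_nth by lia. reflexivity. Qed.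

Lemma indep2 k1 k2 a1 a2 N : k1 <> k2 ->
  exists w, N <= w /\ coord k1 w = a1 /\ coord k2 w = a2.
Proof.
  intro Hne.
  set (M := S (k1 + k2)).
  set (l := map (fun i => if Nat.eqb i k1 then a1 else if Nat.eqb i k2 then a2 else 0) (seq 0 M)).
  exists (enc l N). split; [apply enc_ge|].
  assert (Hl : length l = M) by (unfold l; now rewrite length_map, length_seq).
  rewrite !coord_enc by (rewrite Hl; unfold M; lia).
  unfold l. rewrite !nth_map_seq by (unfold M; lia).
  rewrite Nat.eqb_refl. split; auto.
  destruct (Nat.eqb_spec k2 k1); [lia|]. now rewrite Nat.eqb_refl.
Qed.

Lemma indep1 k a N : exists w, N <= w /\ coord k w = a.
Proof. destruct (indep2 k (S k) a 0 N) as [w [? [? ?]]]; [lia|]. eauto. Qed.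

Definition unbounded (A : nat -> Prop) := forall N, exists a, N <= a /\ A a.

Lemma least_ex (P : nat -> Prop) : (exists n, P n) -> exists a, P a /\ forall b, P b -> a <= b.
Proof.
  intro H. destruct (dec_inh_nat_subset_has_unique_least_element P (fun n => classic (P n)) H)
    as [a [[Ha Hl] _]]. exists a; split; auto.
Qed.

Section Enum.
Variable A : nat -> Prop.
Hypothesis HA : unbounded A.

Lemma nxt_ex m : exists a, (A a /\ m <= a) /\ forall b, A b /\ m <= b -> a <= b.
Proof. apply least_ex. destruct (HA m) as [a [? ?]]; eauto. Qed.

Definition nxt (m : nat) : nat := proj1_sig (constructive_indefinite_description _ (nxt_ex m)).
Lemma nxt_spec m : (A (nxt m) /\ m <= nxt m) /\ forall b, A b /\ m <= b -> nxt m <= b.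
Proof. unfold nxt. destruct (constructive_indefinite_description _ _); simpl; auto. Qed.

Fixpoint hh (n : nat) : nat := match n with 0 => nxt 0 | S n => nxt (S (hh n)) end.

Lemma hh_A n : A (hh n).
Proof. destruct n; simpl; apply nxt_spec. Qed.
Lemma hh_lt n : hh n < hh (S n).
Proof. simpl. apply nxt_spec. Qed.
Lemma hh_mono n m : n < m -> hh n < hh m.
Proof. induction 1. apply hh_lt. pose proof (hh_lt m); lia. Qed.
Lemma hh_inj n m : hh n = hh m -> n = m.
Proof. intro H. destruct (Nat.lt_trichotomy n m) as [h|[h|h]]; auto;
  apply hh_mono in h; lia. Qed.
Lemma hh_ge n : n <= hh n.
Proof. induction n; [lia|]. pose proof (hh_lt n); lia. Qed.
Lemma hh_below n : forall a, A a -> a < hh n -> exists k, hh k = a.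
Proof.
  induction n; intros a Ha Hlt.
  - simpl in Hlt. assert (nxt 0 <= a) by (apply nxt_spec; split; auto; lia). lia.
  - destruct (le_lt_dec (S (hh n)) a).
    + simpl in Hlt. assert (nxt (S (hh n)) <= a) by (apply nxt_spec; auto). lia.
    + destruct (Nat.eq_dec a (hh n)); eauto. apply IHn; auto; lia.
Qed.
Lemma hh_surj a : A a -> exists k, hh k = a.
Proof. intro Ha. apply (hh_below (S a)); auto. pose proof (hh_ge (S a)); lia. Qed.
End Enum.

Lemma bij_nat (A B : nat -> Prop) : unbounded A -> unbounded B ->
  exists phi : nat -> nat, bij_on phi A B.
Proof.
  intros HA HB.
  set (inv := fun a => epsilon (inhabits 0) (fun n => hh A HA n = a)).
  assert (Hinv : forall a, A a -> hh A HA (inv a) = a).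
  { intros a Ha. unfold inv. apply epsilon_spec. apply hh_surj; auto. }
  exists (fun a => hh B HB (inv a)). split; [|split].
  - intros; apply hh_A.
  - intros x y Hx Hy H. apply hh_inj in H. rewrite <- (Hinv x), <- (Hinv y), H; auto.
  - intros y Hy. destruct (hh_surj B HB y Hy) as [k Hk]. exists (hh A HA k). split; [apply hh_A|].
    assert (hh A HA (inv (hh A HA k)) = hh A HA k) by (apply Hinv, hh_A).
    apply hh_inj in H. now rewrite H.
Qed.

Definition invR (x : R) : nat := epsilon (inhabits 0) (fun n => INR n = x).
Lemma invR_INR n : invR (INR n) = n.
Proof. unfold invR. apply INR_eq. apply (epsilon_spec (inhabits 0) (fun k => INR k = INR n)). eauto. Qed.

Lemma bij_lift (A B : nat -> Prop) (phi : nat -> nat) : bij_on phi A B ->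
  bij_on (fun x => INR (phi (invR x))) (fun x => exists m, A m /\ x = INR m)
     (fun x => exists m, B m /\ x = INR m).
Proof.
  intros [H1 [H2 H3]]. split; [|split].
  - intros x [m [Hm ->]]. rewrite invR_INR. eauto.
  - intros x y [m [Hm ->]] [k [Hk ->]] H. rewrite !invR_INR in H. apply INR_eq in H.
    f_equal; auto.
  - intros y [m [Hm ->]]. destruct (H3 m Hm) as [x [Hx Hx']]. exists (INR x). split; eauto.
    now rewrite invR_INR, Hx'.
Qed.

Lemma sigma_ex (E : Type) (gE : E -> nat) (hg : forall x y, gE x = gE y -> x = y)
  (Y : E -> Prop) (SY : Prop) : (exists e, Y e) ->
  exists sg : nat -> option E, (forall n e, sg n = Some e -> Y e) /\
    (forall e, Y e -> exists n, sg n = Some e) /\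
    (SY -> forall n, sg n <> None) /\ (~ SY -> sg 0 = None).
Proof.
  intros [e0 He0].
  assert (Hst : forall n, exists o : option E, (forall e, o = Some e -> Y e /\ gE e = n) /\
     ((exists e, Y e /\ gE e = n) -> o <> None)).
  { intro n. destruct (classic (exists e, Y e /\ gE e = n)) as [[e [He1 He2]]|Hn].
    - exists (Some e). split; [|congruence]. intros e' H; inversion H; subst; auto.
    - exists None. split; [discriminate|tauto]. }
  set (tau := fun n => proj1_sig (constructive_indefinite_description _ (Hst n))).
  assert (Htau : forall n, (forall e, tau n = Some e -> Y e /\ gE e = n) /\
     ((exists e, Y e /\ gE e = n) -> tau n <> None)).
  { intro n. unfold tau. destruct (constructive_indefinite_description _ _); auto. }
  set (s0 := fun n => match n with 0 => None | S n => tau n end).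
  assert (Hs1 : forall n e, s0 n = Some e -> Y e).
  { intros [|n] e H; simpl in H; [discriminate|]. apply (Htau n); auto. }
  assert (Hs2 : forall e, Y e -> exists n, s0 n = Some e).
  { intros e He. exists (S (gE e)). simpl. destruct (Htau (gE e)) as [Ha Hb].
    destruct (tau (gE e)) as [e'|] eqn:Ht.
    - destruct (Ha e' eq_refl) as [_ Hg]. apply hg in Hg. now subst.
    - exfalso. apply Hb; eauto. }
  destruct (classic SY) as [HS|HS].
  - exists (fun n => match s0 n with None => Some e0 | x => x end). split; [|split; [|split]].
    + intros n e. destruct (s0 n) eqn:Hn; intro H; inversion H; subst; eauto; fail.
    + intros e He. destruct (Hs2 e He) as [n Hn]. exists n. now rewrite Hn.
    + intros _ n. destruct (s0 n); discriminate.
    + tauto.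
  - exists s0. split; [|split; [|split]]; auto; tauto.
Qed.
Open Scope R_scope.

Theorem theorem3p1 (V E : Type) (r s : E -> V) (C S : (E -> Prop) -> Prop)
  (hV : countable_type V) (hE : countable_type E)
  (hC : is_separation s C)
  (hS : forall X, S X -> C X /\ finite_set X) :
  exists (Xs : R -> Prop) (Rs : E -> R -> Prop) (D : V -> R -> Prop) (f : E -> R -> R),
    alg_branching_system r s C S Xs Rs D f /\
    forall v, non_sink s v ->
      (forall X Y, in_Cv s C v X -> in_Cv s C v Y -> X <> Y ->
         forall e g, X e -> Y g -> exists x, Rs e x /\ Rs g x) /\
      (forall X, in_Cv s C v X -> ~ S X ->
         (forall x, union_R Rs X x -> D v x) /\
         (exists x, D v x /\ ~ union_R Rs X x)) /\
      (forall X Y, in_Cv s C v X -> in_Cv s C v Y -> ~ S X -> ~ S Y -> X <> Y ->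
         ~ (forall x, union_R Rs X x <-> union_R Rs Y x)).
Proof.
  destruct hV as [gV hgV]. destruct hE as [gE hgE].
  destruct hC as [Cne [Csrc [Cdisj Ccov]]].
  set (P := fun (Y : E -> Prop) (sg : nat -> option E) =>
    (forall n e, sg n = Some e -> Y e) /\
    (forall e, Y e -> exists n, sg n = Some e) /\
    (S Y -> forall n, sg n <> None) /\ (~ S Y -> sg 0%nat = None)).
  set (sig := fun Y => epsilon (inhabits (fun _ : nat => @None E)) (P Y)).
  assert (Hsig : forall Y, C Y -> P Y (sig Y)).
  { intros Y HY. unfold sig. apply epsilon_spec. apply (sigma_ex E gE hgE); auto. }
  set (K := fun (Y : E -> Prop) => epsilon (inhabits 0%nat) (fun n => exists e, Y e /\ gE e = n)).
  assert (HK : forall Y, C Y -> exists e, Y e /\ gE e = K Y).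
  { intros Y HY. unfold K. apply (epsilon_spec (inhabits 0%nat) (fun n => exists e, Y e /\ gE e = n)).
    destruct (Cne Y HY) as [e He]; eauto. }
  assert (Kinj : forall X Y, C X -> C Y -> K X = K Y -> X = Y).
  { intros X Y HX HY H. destruct (HK X HX) as [e [He1 He2]]. destruct (HK Y HY) as [e' [He1' He2']].
    assert (e = e') by (apply hgE; congruence). subst. apply Cdisj; eauto. }
  set (cls := fun e => epsilon (inhabits (fun _ : E => False)) (fun X => C X /\ X e)).
  assert (Hcls : forall e, C (cls e) /\ cls e e).
  { intro e. unfold cls. apply (epsilon_spec (inhabits (fun _ : E => False)) (fun X => C X /\ X e)).
    apply Ccov. }
  assert (clsE : forall Y e, C Y -> Y e -> cls e = Y).
  { intros Y e HY He. destruct (Hcls e). apply Cdisj; eauto. }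
  set (An := fun e w => sig (cls e) (coord (K (cls e)) w) = Some e).
  set (Rn := fun e m => exists w, m = pr (gV (s e)) w /\ An e w).
  set (Dn := fun v m => exists w, m = pr (gV v) w).
  set (Rs := fun e x => exists m, Rn e m /\ x = INR m).
  set (D := fun v x => exists m, Dn v m /\ x = INR m).
  assert (UR : forall e, unbounded (Rn e)).
  { intros e N. destruct (Hcls e) as [HC1 HC2]. destruct (Hsig _ HC1) as [_ [H2 _]].
    destruct (H2 e HC2) as [n Hn]. destruct (indep1 (K (cls e)) n N) as [w [Hw1 Hw2]].
    exists (pr (gV (s e)) w). pose proof (pr_ge (gV (s e)) w). split; [lia|].
    exists w. split; auto. unfold An. now rewrite Hw2. }
  assert (UD : forall v, unbounded (Dn v)).
  { intros v N. exists (pr (gV v) N). split; [apply pr_ge|]. exists N; auto. }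
  set (phi := fun e => epsilon (inhabits (fun n : nat => n)) (fun ph => bij_on ph (Dn (r e)) (Rn e))).
  assert (Hphi : forall e, bij_on (phi e) (Dn (r e)) (Rn e)).
  { intro e. unfold phi. apply epsilon_spec. apply bij_nat; auto. }
  exists (fun _ => True), Rs, D, (fun e x => INR (phi e (invR x))).
  assert (RsD : forall e x, Rs e x -> D (s e) x).
  { intros e x [m [[w [-> _]] ->]]. exists (pr (gV (s e)) w); split; auto. exists w; auto. }
  split.
  - split; [auto|]. split; [auto|]. split; [|split; [|split; [|split]]].
    + intros Y d e HY Hd He Hne x [[m [[w [-> Hw]] ->]] [m' [[w' [-> Hw'] ] Heq]]].
      apply INR_eq in Heq. apply pr_inj in Heq. destruct Heq as [_ ->].
      unfold An in *. rewrite (clsE Y d HY Hd) in Hw. rewrite (clsE Y e HY He) in Hw'.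
      apply Hne. congruence.
    + intros u v Huv x [[m [[w ->] ->]] [m' [[w' ->] Heq]]].
      apply INR_eq in Heq. apply pr_inj in Heq. destruct Heq as [Heq _]. apply hgV in Heq. auto.
    + exact RsD.
    + intros v Y _ HSY [HY HYv] x. split.
      * intros [m [[w ->] ->]]. destruct (Hsig Y HY) as [H1 [_ [H3 _]]].
        destruct (sig Y (coord (K Y) w)) as [e|] eqn:Hn; [|exfalso; eapply H3; eauto].
        assert (He : Y e) by eauto. exists e. split; auto.
        exists (pr (gV v) w). split; auto. exists w. split; [now rewrite (HYv e He)|].
        unfold An. now rewrite (clsE Y e HY He).
      * intros [e [He Hx]]. rewrite <- (HYv e He). auto.
    + intro e. apply bij_lift. apply Hphi.
  - intros v _. split; [|split].
    + intros X Y [HX HXv] [HY HYv] HXY e g He Hg.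
      destruct (Hsig X HX) as [_ [HX2 _]]. destruct (Hsig Y HY) as [_ [HY2 _]].
      destruct (HX2 e He) as [n1 Hn1]. destruct (HY2 g Hg) as [n2 Hn2].
      assert (HK' : K X <> K Y) by (intro H; apply HXY; auto).
      destruct (indep2 (K X) (K Y) n1 n2 0 HK') as [w [_ [Hw1 Hw2]]].
      exists (INR (pr (gV v) w)). split.
      * exists (pr (gV v) w). split; auto. exists w. split; [now rewrite HXv|].
        unfold An. rewrite (clsE X e HX He), Hw1. auto.
      * exists (pr (gV v) w). split; auto. exists w. split; [now rewrite HYv|].
        unfold An. rewrite (clsE Y g HY Hg), Hw2. auto.
    + intros X [HX HXv] HSX. split.
      * intros x [e [He Hx]]. rewrite <- (HXv e He). auto.
      * destruct (Hsig X HX) as [_ [_ [_ H4]]]. specialize (H4 HSX).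
        destruct (indep1 (K X) 0 0) as [w [_ Hw]].
        exists (INR (pr (gV v) w)). split; [exists (pr (gV v) w); split; auto; exists w; auto|].
        intros [e [He [m [[w' [Hm Hw']] Heq]]]]. apply INR_eq in Heq.
        rewrite Hm, (HXv e He) in Heq. apply pr_inj in Heq. destruct Heq as [_ <-].
        unfold An in Hw'. rewrite (clsE X e HX He), Hw, H4 in Hw'. discriminate.
    + intros X Y [HX HXv] [HY HYv] HSX HSY HXY Heq.
      destruct (Hsig X HX) as [_ [_ [_ H4]]]. specialize (H4 HSX).
      destruct (Cne Y HY) as [g Hg].
      destruct (Hsig Y HY) as [_ [HY2 _]]. destruct (HY2 g Hg) as [n2 Hn2].
      assert (HK' : K X <> K Y) by (intro H; apply HXY; auto).
      destruct (indep2 (K X) (K Y) 0 n2 0 HK') as [w [_ [Hw1 Hw2]]].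
      assert (Hu : union_R Rs Y (INR (pr (gV v) w))).
      { exists g. split; auto. exists (pr (gV v) w). split; auto. exists w. split; [now rewrite HYv|].
        unfold An. rewrite (clsE Y g HY Hg), Hw2. auto. }
      apply Heq in Hu. destruct Hu as [e [He [m [[w' [Hm Hw']] Heq']]]]. apply INR_eq in Heq'.
      rewrite Hm, (HXv e He) in Heq'. apply pr_inj in Heq'. destruct Heq' as [_ <-].
      unfold An in Hw'. rewrite (clsE X e HX He), Hw1, H4 in Hw'. discriminate.
Qed.
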